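(* Let $d \ge 1$ and let $\beta = (\beta_1,\ldots,\beta_{d+1})$ be an optimal solution of the problem of minimizing $\beta_1\cdots\beta_d$ over all $(\beta_1,\dots,\beta_{d+1}) \in \mathbb{R}^{d+1}$ satisfying $\beta_1 \ge \cdots \ge \beta_{d+1} \ge 0$, $\beta_1+\cdots+\beta_{d+1}=1$, and, for every $t \in \{1,\dots,d\}$, $\prod_{i=1}^t (\beta_i - \beta_{d+1}) \le \sum_{j=t+1}^{d+1} (\beta_j - \beta_{d+1}) + (d+1)\beta_{d+1}$. Then there exists $\ell \in \{1,\dots,d\}$ such that (a) $\beta_1 \cdots \beta_d = f_\ell(\beta_{d+1})$, and (b) $\frac{1}{(d+1)(s_{\ell+1}-1)} \le \beta_{d+1} \le \frac{1}{(d+1)(s_\ell-1)}$.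
   Context: The Sylvester sequence is defined by $s_1 := 2$ and $s_i := 1 + s_1 s_2 \cdots s_{i-1}$ for $i \ge 2$. For $\ell \in \{1,\dots,d\}$ and $\alpha\in\mathbb{R}$, $f_\ell(\alpha) := \Bigl(\prod_{i=1}^{\ell-1}\bigl(\tfrac{1}{s_i}+\alpha\bigr)\Bigr)\bigl(\tfrac{1}{s_\ell-1} - d\alpha\bigr)\alpha^{d-\ell}$ (the empty product being $1$). *)

(* Defs.v *)
From mathcomp Require Import all_boot all_order all_algebra.
From mathcomp Require Import reals.
Set Implicit Arguments. Unset Strict Implicit. Unset Printing Implicit Defensive.
Import Order.TTheory GRing.Theory Num.Theory.

(* sylv_prod n = s_1 * ... * s_n  (empty product = 1). *)
Fixpoint sylv_prod (n : nat) : nat :=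
  match n with
  | 0 => 1
  | n'.+1 => sylv_prod n' * (sylv_prod n').+1
  end.

(* Sylvester sequence, indexed from 1: s_i = 1 + s_1 ... s_{i-1}; s_1 = 2. *)
Definition sylv (i : nat) : nat := (sylv_prod i.-1).+1.

Lemma sylv_prodE n : sylv_prod n = \prod_(1 <= j < n.+1) sylv j.
Proof.
elim: n => [|n IH]; first by rewrite big_geq.
rewrite big_nat_recr //= -IH; reflexivity.
Qed.

Lemma sylv1 : sylv 1 = 2. Proof. by []. Qed.
Lemma sylv_rec i : 2 <= i -> sylv i = 1 + \prod_(1 <= j < i) sylv j.
Proof. by case: i => [|[|i]] // _; rewrite -sylv_prodE add1n. Qed.

Local Open Scope ring_scope.

(* Vectors beta = (beta_1, ..., beta_{d+1}) are functions nat -> R;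
   only the indices 1..d+1 are used. *)
Definition feasible (R : realType) (d : nat) (b : nat -> R) : Prop :=
  (forall i : nat, (1 <= i <= d)%N -> b i.+1 <= b i) /\
  0 <= b d.+1 /\
  \sum_(1 <= i < d.+2) b i = 1 /\
  (forall t : nat, (1 <= t <= d)%N ->
     \prod_(1 <= i < t.+1) (b i - b d.+1)
       <= \sum_(t.+1 <= j < d.+2) (b j - b d.+1) + (d.+1)%:R * b d.+1).

Definition objective (R : realType) (d : nat) (b : nat -> R) : R :=
  \prod_(1 <= i < d.+1) b i.

Definition optimal (R : realType) (d : nat) (b : nat -> R) : Prop :=
  feasible d b /\ forall g : nat -> R, feasible d g -> objective d b <= objective d g.

Definition f_ell (R : realType) (d l : nat) (a : R) : R :=
  (\prod_(1 <= i < l) (1 / (sylv i)%:R + a)) *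
  (1 / ((sylv l)%:R - 1) - d%:R * a) * a ^+ (d - l).

(* Main.v *)
Require Import Defs.
From mathcomp Require Import all_boot all_order all_algebra.
From mathcomp Require Import reals.
From mathcomp Require Import ring lra zify.
Import Order.TTheory GRing.Theory Num.Theory.
Local Open Scope ring_scope.
Section S.
Variable R : realType.

Lemma invle (u v : R) : 0 < u -> u <= v -> v^-1 <= u^-1.
Proof.
move=> hu huv; have hv : 0 < v by apply: lt_le_trans huv.
by rewrite lef_pV2 // posrE.
Qed.

Definition pp t : R := ((sylv_prod t)%:R)^-1.
Definition gg i : R := 1 / (sylv i)%:R.

Lemma Npos t : (0 < sylv_prod t)%N.
Proof. elim: t => [|t IH] //=; by rewrite muln_gt0 IH. Qed.

Lemma NposR t : (0 : R) < (sylv_prod t)%:R.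
Proof. by rewrite ltr0n Npos. Qed.

Lemma pp_pos t : 0 < pp t.
Proof. by rewrite /pp invr_gt0 NposR. Qed.

Lemma pp0 : pp 0 = 1.
Proof. by rewrite /pp /= invr1. Qed.

Lemma ppS t : pp t.+1 * (1 + pp t) = pp t ^+ 2.
Proof.
rewrite /pp /= natrM -addn1 natrD.
have h := NposR t. field; lra.
Qed.

Lemma ppS_le t : pp t.+1 <= pp t.
Proof. have h1 := ppS t; have h2 := pp_pos t; have h3 := pp_pos t.+1. nra. Qed.

Lemma pp_le1 t : pp t <= 1.
Proof. elim: t => [|t IH]; first by rewrite pp0. exact: le_trans (ppS_le t) IH. Qed.

Lemma ggS t : gg t.+1 = pp t - pp t.+1.
Proof.
rewrite /gg /pp /sylv /= natrM -addn1 natrD.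
have h := NposR t. field; lra.
Qed.

Lemma gg_ge0 t : 0 <= gg t.
Proof. by rewrite /gg divr_ge0. Qed.

Lemma pp_le_gg t : pp t.+1 <= gg t.+1.
Proof. rewrite ggS; have h1 := ppS t; have h2 := pp_pos t; have h3 := pp_pos t.+1.
have := pp_le1 t. nra. Qed.

Lemma gg_dec t : gg t.+2 <= gg t.+1.
Proof.
rewrite /gg /sylv /= !mul1r; apply: invle; rewrite ?ltr0n //.
rewrite ler_nat ltnS -[X in (X <= _)%N]muln1 leq_mul2l; apply/orP; right.
by rewrite ltnS.
Qed.

Lemma sum_gg k : \sum_(0<=i<k) gg i.+1 = 1 - pp k.
Proof.
elim: k => [|k IH]; first by rewrite big_geq // pp0 subrr.
by rewrite big_nat_recr //= IH ggS; ring.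
Qed.

Lemma prod_gg k : \prod_(0<=i<k) gg i.+1 = pp k.
Proof.
elim: k => [|k IH]; first by rewrite big_geq // pp0.
rewrite big_nat_recr //= IH /gg /pp /sylv /= natrM -addn1 natrD.
have h := NposR k. field; lra.
Qed.

Lemma pp_sylv t : 1 / ((sylv t.+1)%:R - 1) = pp t.
Proof. by rewrite /sylv /= -addn1 natrD addrK mul1r. Qed.

Definition avec m (r : R) i : R := if (i < m)%N then gg i.+1 else if i == m then r else 0.

Lemma sum_avec_le m r k : (k <= m)%N -> \sum_(0<=i<k) avec m r i = 1 - pp k.
Proof.
move=> hk; rewrite -sum_gg; apply: eq_big_nat => i /andP [_ hi].
by rewrite /avec ifT //; lia.
Qed.

Lemma sum_avec_gt m r k : (m < k)%N -> \sum_(0<=i<k) avec m r i = 1 - pp m + r.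
Proof.
move=> hk; rewrite (big_cat_nat (n:=m)) //= ?sum_avec_le //; last by lia.
rewrite big_ltn // {1}/avec ltnn eqxx.
rewrite (eq_big_nat _ _ (F2 := fun _ => 0)) ?big1 ?addr0 //.
by move=> i /andP [hi _]; rewrite /avec ifF ?ifF //; lia.
Qed.

Lemma prod_avec_le m r k : (k <= m)%N -> \prod_(0<=i<k) avec m r i = pp k.
Proof.
move=> hk; rewrite -prod_gg; apply: eq_big_nat => i /andP [_ hi].
by rewrite /avec ifT //; lia.
Qed.

Lemma prod_avec_gt m r al k : (m < k)%N ->
  \prod_(0<=i<k) (avec m r i + al) =
  (\prod_(0<=i<m) (gg i.+1 + al)) * (r + al) * al ^+ (k - m.+1).
Proof.
move=> hk; rewrite (big_cat_nat (n:=m)) //=; last by lia.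
rewrite (eq_big_nat _ _ (m:=0) (n:=m) (F1 := fun i => avec m r i + al) (F2 := fun i => gg i.+1 + al)); last first.
  by move=> i /andP [_ hi]; rewrite /avec ifT.

rewrite (@big_ltn _ _ _ m k) // {1}/avec ltnn eqxx -mulrA.
rewrite (eq_big_nat _ _ (m:=m.+1) (n:=k) (F2 := fun _ => al)) ?prodr_const_nat //.
by move=> i /andP [hi _]; rewrite /avec ifF ?ifF ?add0r //; lia.
Qed.

Lemma agm1 n (E : nat -> R) : (forall i, (i < n.+1)%N -> 0 <= E i) -> \sum_(0<=i<n.+1) E i <= n.+1%:R -> \prod_(0<=i<n.+1) E i <= 1.
Proof.
move=> hE0 hs.
have := @leif_AGM R _ [pred _ : 'I_n.+1 | true] (fun i => E (nat_of_ord i)).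
move=> /= /(_ (fun i _ => hE0 i (ltn_ord i))) /Order.le_of_leif.
have hc : #|[pred: 'I_n.+1 | true]| = n.+1 by rewrite card_ord.
rewrite hc !(eq_bigl (fun _ => true) _ (fun i => erefl)).
rewrite -!(big_mkord xpredT E) => h; apply: (le_trans h).
apply: exprn_ile1.
  by apply: divr_ge0 => //; rewrite big_nat_cond; apply: sumr_ge0 => i /andP [/andP [_ hi] _]; apply: hE0.
by rewrite ler_pdivrMr ?mul1r // ltr0n.
Qed.

Lemma abel (n : nat) (c d : nat -> R) (K : R) :
  (forall i, (i < n)%N -> c i <= K) ->
  (forall i j, (i <= j)%N -> (j < n)%N -> c i <= c j) ->
  (forall k, (k <= n)%N -> \sum_(0 <= i < k) d i <= 0) ->
  K * \sum_(0 <= i < n) d i <= \sum_(0 <= i < n) c i * d i.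
Proof.
elim: n K => [|n IH] K hK hc hD.
  by rewrite !big_geq // mulr0.
rewrite !big_nat_recr //=.
have h1 : c n * \sum_(0 <= i < n) d i <= \sum_(0 <= i < n) c i * d i.
  apply: IH.
  - by move=> i hi; apply: hc => //; lia.
  - by move=> i j hij hj; apply: hc => //; lia.
  - by move=> k hk; apply: hD; lia.
have hDn1 := hD n.+1 (leqnn _). rewrite big_nat_recr //= in hDn1.
have hKn := hK n (ltnSn n).
nra.
Qed.


Lemma PL n al (y a : nat -> R) :
 (forall i, (i < n)%N -> 0 < y i + al) ->
 (forall i, (i < n)%N -> 0 <= a i + al) ->
 (forall i j, (i <= j)%N -> (j < n)%N -> y j <= y i) ->
 (forall k, (k <= n)%N -> \sum_(0<=i<k) y i <= \sum_(0<=i<k) a i) ->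
 \sum_(0<=i<n) y i = \sum_(0<=i<n) a i ->
 \prod_(0<=i<n) (a i + al) <= \prod_(0<=i<n) (y i + al).
Proof.
case: n => [|n] hy ha hmon hpre htot; first by rewrite !big_geq.
pose c i := (y i + al)^-1.
have hab : 0 <= \sum_(0<=i<n.+1) c i * (y i - a i).
  have := @abel n.+1 c (fun i => y i - a i) (c n).
  rewrite big_split /= sumrN htot subrr mulr0; apply.
  - by move=> i hi; apply: invle; [apply: hy | have := hmon i n hi (ltnSn n); lra].
  - move=> i j hij hj; apply: invle; first by apply: hy.
    by have := hmon i j hij hj; lra.
  - by move=> k hk; rewrite big_split /= sumrN subr_le0; apply: hpre.
pose E i := (a i + al) / (y i + al).
have hE : forall i, (i < n.+1)%N -> E i = 1 - c i * (y i - a i).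
  move=> i hi; rewrite /E /c; have := hy i hi => h.
  field; lra.
have hsumE : \sum_(0<=i<n.+1) E i <= n.+1%:R.
  rewrite big_nat_cond (eq_bigr (fun i => 1 - c i * (y i - a i))); last first.
    by move=> i /andP [/andP [_ hi] _]; apply: hE.
  rewrite -big_nat_cond big_split /= sumrN sumr_const_nat subn0.
  by rewrite -[X in _ <= X]subr0 lerB.
have hprodE : \prod_(0<=i<n.+1) E i <= 1.
  apply: agm1 => // i hi; apply: divr_ge0; [exact: ha | exact: ltW (hy i hi)].
move: hprodE; rewrite /E prodf_div ler_pdivrMr ?mul1r //.
rewrite big_nat_cond; apply: prodr_gt0 => i /andP [/andP [_ hi] _]; exact: hy.
Qed.

Lemma avec_dec m r j : 0 <= r -> r <= pp m -> avec m r j.+1 <= avec m r j.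
Proof.
move=> h0 h1; rewrite /avec.
case: ifP => A.
  by rewrite ifT; [apply: gg_dec | lia].
case: ifP => B.
  rewrite ifT; last by move/eqP: B; lia.
  by apply: le_trans h1 _; move/eqP: B => <-; apply: pp_le_gg.
case: ifP => C; first by move/eqP: B; lia.
by case: ifP.
Qed.

Lemma avec_ge0 m r j : 0 <= r -> 0 <= avec m r j.
Proof.
move=> h0; rewrite /avec; case: ifP => _; first exact: gg_ge0.
by case: ifP.
Qed.

Lemma choose_l n (z : R) : pp n.+1 <= z -> z <= pp 0 ->
  exists m, (m <= n)%N /\ pp m.+1 <= z /\ z <= pp m.
Proof.
elim: n => [|n IH] h1 h2; first by exists 0%N.
case: (leP z (pp n.+1)) => h; first by exists n.+1.
have [m [hm [hm1 hm2]]] := IH (ltW h) h2.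
by exists m; split => //; lia.
Qed.

Lemma bnd t (c : R) : 1 / (c * ((sylv t.+1)%:R - 1)) = pp t / c.
Proof. by rewrite -pp_sylv !mul1r invfM mulrC. Qed.

End S.


Theorem lemma3p2 (R : realType) (d : nat) (b : nat -> R) :
  (1 <= d)%N -> optimal d b ->
  exists l : nat, (1 <= l <= d)%N /\ objective d b = f_ell d l (b d.+1) /\
    1 / ((d.+1)%:R * ((sylv l.+1)%:R - 1)) <= b d.+1 /\
    b d.+1 <= 1 / ((d.+1)%:R * ((sylv l)%:R - 1)).
Proof.
move=> hd [[hadj [ha0 [hsum hcon]]] hopt].
set al := b d.+1.
pose y i := b i.+1 - al.
pose sg k := \sum_(0<=i<k) y i.
have hdec : forall i j, (i <= j)%N -> (j <= d)%N -> b j.+1 <= b i.+1.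
  move=> i j; elim: j => [|j IH] hij hj.
    by have -> : i = 0%N by lia.
  case: (ltngtP i j.+1) => [hlt|hgt|->]; [|lia|by []].
  apply: le_trans (IH _ _); [apply: hadj; lia | lia | lia].
have hy0 : forall i, (i <= d)%N -> 0 <= y i.
  by move=> i hi; rewrite /y subr_ge0; apply: hdec.
have hsgd : sg d = 1 - d.+1%:R * al.
  move: hsum; rewrite big_nat_recr //= big_add1 /= -/al => hsum.
  rewrite /sg /y big_split /= sumrN sumr_const_nat subn0 -[al *+ d]mulr_natl.
  rewrite -addn1 natrD; lra.
have hsgmono : forall k, (k <= d)%N -> sg k <= sg d.
  move=> k hk; rewrite /sg (big_cat_nat (n:=k) (p:=d)) //= lerDl.
  by rewrite big_nat_cond; apply: sumr_ge0 => i /andP [/andP [_ hi] _]; apply: hy0; lia.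
have hsg0 : forall k, (k <= d)%N -> 0 <= sg k.
  by move=> k hk; rewrite /sg big_nat_cond; apply: sumr_ge0 => i /andP [/andP [_ hi] _]; apply: hy0; lia.
have hcon' : forall t, (1 <= t <= d)%N -> \prod_(0<=i<t) y i <= 1 - sg t.
  move=> t ht; have := hcon t ht.
  rewrite big_add1 /= big_add1 /= big_nat_recr /=; last by lia.
  rewrite -/al subrr addr0.
  have e : \sum_(t <= i < d) (b i.+1 - al) = sg d - sg t.
    by rewrite /sg (big_cat_nat (n:=t) (m:=0) (p:=d)) //=; [ring | lia].
  rewrite e hsgd => h; apply: (le_trans h); lra.
have N1 : forall t, (t <= d)%N -> forall k, (k <= t)%N -> sg k <= 1 - pp R k.
  elim=> [|t IH] ht k hk.
    have -> : k = 0%N by lia.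
    by rewrite /sg big_geq // pp0 subrr.
  have IH' := IH (ltnW ht).
  case: (ltnP k t.+1) => hkt; first by apply: IH'; lia.
  have -> : k = t.+1 by lia.
  have e1 : sg t.+1 = sg t + y t by rewrite /sg big_nat_recr.
  have hle := ppS_le R t.
  case: (leP (y t) 0) => hyt0.
    by have := IH' t (leqnn t); lra.
  case: (leP (sg t.+1) (1 - pp R t)) => hs; first lra.
  have hPL := @PL R t.+1 0 y (avec R t (sg t.+1 - (1 - pp R t))).
  have hP : \prod_(0 <= i < t.+1) (avec R t (sg t.+1 - (1 - pp R t)) i + 0)
          <= \prod_(0 <= i < t.+1) (y i + 0).
    apply: hPL.
    - move=> i hi; rewrite addr0; apply: lt_le_trans hyt0 _.
      by rewrite /y lerD2r; apply: hdec; lia.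
    - by move=> i hi; rewrite addr0; apply: avec_ge0; lra.
    - by move=> i j hij hj; rewrite /y lerD2r; apply: hdec; lia.
    - move=> k' hk'; case: (ltnP k' t.+1) => hk2.
        rewrite sum_avec_le; last by lia.
        by apply: IH'; lia.
      have -> : k' = t.+1 by lia.
      by rewrite sum_avec_gt // -/(sg t.+1); lra.
    - by rewrite sum_avec_gt // -/(sg t.+1); lra.
  rewrite prod_avec_gt // subnn expr0 mulr1 in hP.
  have e2 : \prod_(0 <= i < t) (gg R i.+1 + 0) = pp R t.
    by rewrite -prod_gg; apply: eq_bigr => i _; rewrite addr0.
  have e3 : \prod_(0 <= i < t.+1) (y i + 0) = \prod_(0 <= i < t.+1) y i.
    by apply: eq_bigr => i _; rewrite addr0.
  rewrite e2 e3 addr0 in hP.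
  have hc := hcon' t.+1 ht.
  have hpS := ppS R t; have hp := pp_pos R t; have hp1 := pp_pos R t.+1.
  nra.
have hN1d := N1 d (leqnn d) d (leqnn d).
rewrite hsgd in hN1d.
set z := d.+1%:R * al.
have hzdef : d.+1%:R * al = z := erefl.
rewrite hzdef in hN1d hsgd.
have hz1 : z <= 1 by have := hsg0 d (leqnn d); rewrite hsgd; lra.
have hzp : pp R d <= z by lra.
have hz0 : 0 < z by have := pp_pos R d; lra.
have hd1 : (0 : R) < d.+1%:R by rewrite ltr0n.
have hal : 0 < al.
  have := pp_pos R d => hp.
  rewrite /z in hzp; nra.
have [m [hm [hm1 hm2]]] : exists m, (m <= d.-1)%N /\ pp R m.+1 <= z /\ z <= pp R m.
  apply: choose_l; last by rewrite pp0.
  by have -> : d.-1.+1 = d by lia.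
have hmd : (m < d)%N by apply: leq_ltn_trans hm _; rewrite ltn_predL.
set r := pp R m - z.
have hr0 : 0 <= r by rewrite /r; lra.
have hrp : r <= pp R m by rewrite /r; lra.
pose a := avec R m r.
have hsa : \sum_(0 <= i < d.+1) a i = 1 - z.
  rewrite /a sum_avec_gt; last by rewrite ltnS ltnW.
  by rewrite /r; lra.
have hsa' : \sum_(0 <= i < d) a i = 1 - z.
  by rewrite /a sum_avec_gt // /r; lra.
have hfl : f_ell d m.+1 al = \prod_(0 <= i < d) (a i + al).
  rewrite /a prod_avec_gt // /f_ell big_add1 /= pp_sylv /r /z.
  congr (_ * _ * _); rewrite -addn1 natrD; ring.
have hobj : objective d b = \prod_(0 <= i < d) (y i + al).
  rewrite /objective big_add1 /=; apply: eq_bigr => i _.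
  by rewrite /y subrK.
exists m.+1; split; first by apply/andP; split.
split.
  apply/eqP; rewrite eq_le; apply/andP; split.
  - pose bs i := a i.-1 + al.
    have hdm1 : (d < m)%N = false by rewrite ltnNge ltnW.
    have hdm2 : (d == m) = false by rewrite gtn_eqF.
    have hbs : bs d.+1 = al by rewrite /bs /a /avec /= hdm1 hdm2 add0r.
    have hfe : feasible d bs.
      split; [|split; [|split]].
      - move=> i hi; rewrite /bs lerD2r.
        case: i hi => [|i] hi; first by case/andP: hi.
        by apply: avec_dec.
      - by rewrite hbs; apply: ltW.
      - rewrite big_add1 /= /bs big_split /= sumr_const_nat subn0 hsa.
        by rewrite -mulr_natl /z; lra.
      - move=> t ht; rewrite hbs.
        rewrite (eq_bigr (fun i => a i.-1)); last by move=> i _; rewrite /bs addrK.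
        rewrite (eq_bigr (fun i => a i.-1) (P := xpredT) (r := index_iota t.+1 d.+2)); last by move=> i _; rewrite /bs addrK.
        rewrite !big_add1 /=.
        have e : \sum_(t <= i < d.+1) a i = (1 - z) - \sum_(0 <= i < t) a i.
          by rewrite -hsa (big_cat_nat (n:=t) (m:=0) (p:=d.+1)) //=; [ring | case/andP: ht => _ /leqW].
        rewrite e -/z.
        case: (leqP t m) => htm.
          rewrite /a sum_avec_le // prod_avec_le //; lra.
        rewrite /a sum_avec_gt // /r.
        have -> : \prod_(0 <= i < t) avec R m (pp R m - z) i
                = \prod_(0 <= i < t) (avec R m (pp R m - z) i + 0).
          by apply: eq_bigr => i _; rewrite addr0.
        rewrite prod_avec_gt //.
        have -> : \prod_(0 <= i < m) (gg R i.+1 + 0) = pp R m.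
          by rewrite -prod_gg; apply: eq_bigr => i _; rewrite addr0.
        rewrite expr0n addr0.
        case: eqP => _.
          have hpS := ppS R m; have hp := pp_pos R m.
          rewrite mulr1; nra.
        by rewrite mulr0; lra.
    have ebs : \prod_(1 <= i < d.+1) bs i = \prod_(0 <= i < d) (a i + al).
      by rewrite big_add1 /=; apply: eq_bigr => i _.
    by rewrite hfl -ebs; apply: hopt.
  - rewrite hfl hobj; apply: PL.
    + by move=> i hi; rewrite /y subrK; apply: lt_le_trans hal _; rewrite /al; apply: hdec (ltnW hi) (leqnn d).
    + by move=> i hi; apply: addr_ge0; [apply: avec_ge0 | apply: ltW].
    + by move=> i j hij hj; rewrite /y lerD2r; apply: hdec hij (ltnW hj).
    + move=> k hk; case: (leqP k m) => hkm.
        by rewrite /a sum_avec_le //; apply: (N1 k hk k (leqnn k)).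
      rewrite /a sum_avec_gt // /r -/(sg k).
      by have := hsgmono k hk; lra.
    + by rewrite -/(sg d) hsgd hsa'.
split.
  by rewrite bnd ler_pdivrMr // mulrC.
by rewrite bnd ler_pdivlMr // mulrC.
Qed.
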